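(* For each $i$ (indices mod $8g-4$): (i) the angle at $V_{i+1}$ between the geodesics $V_{i+1}P_{i+2}$ and $V_{i+1}Q_{i+1}$ is greater than $\pi/4$; (ii) the angle at $V_i$ between the geodesics $V_iQ_{i-1}$ and $V_iP_i$ is greater than $\pi/4$.
   Context: Fix $g\ge 2$. Let $\mathcal F$ be the regular hyperbolic $(8g-4)$-gon in the Poincaré unit disk, centered at $0$, with all interior angles equal to $\pi/2$. Label its sides $1,\dots,8g-4$ counterclockwise (indices mod $8g-4$) and its vertices $V_i$ so that side $i$ joins $V_i$ to $V_{i+1}$. The complete geodesic containing side $i$ has endpoints $P_i$ (beyond $V_i$) and $Q_{i+1}$ (beyond $V_{i+1}$) on the unit circle; counterclockwise order on the circle is $P_1,Q_1,P_2,Q_2,\dots,P_{8g-4},Q_{8g-4}$. For a vertex $V$ and a point $X$ on the unit circle, $VX$ denotes the geodesic ray from $V$ to $X$. *)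

(* Defs.v *)
From Stdlib Require Import Reals Lra ZArith.
From Coquelicot Require Import Coquelicot.
Open Scope R_scope.

Definition nsides (g : nat) : R := 8 * INR g - 4.

Definition cis (t : R) : C := (cos t, sin t).

(* Vertex V_k of the regular polygon centered at 0 with Euclidean radius r
   and initial phase th0 (indices k in Z, hence automatically mod 8g-4;
   labelled counterclockwise). *)
Definition vert (g : nat) (r th0 : R) (k : Z) : C :=
  Cmult (RtoC r) (cis (th0 + 2 * PI * IZR k / nsides g)).

(* Unit tangent direction (up to a positive factor) at the point V of the
   hyperbolic geodesic from V towards X (X in the open disk or on the unit
   circle): apply the disk isometry z |-> (z - V)/(1 - conj V z) sending V
   to 0 (whose derivative at V is a positive real), where geodesics through
   0 are diameters. *)
Definition gdir (V X : C) : C :=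
  Cdiv (Cminus X V) (Cminus (RtoC 1) (Cmult (Cconj V) X)).

Definition vangle (u v : C) : R :=
  acos (Re (Cmult u (Cconj v)) / (Cmod u * Cmod v)).

(* Hyperbolic angle at V between the geodesics VX and VY
   (the Poincare disk model is conformal). *)
Definition hangle (V X Y : C) : R := vangle (gdir V X) (gdir V Y).

Definition disk_aut (a : C) (th : R) (z : C) : C :=
  Cmult (cis th) (Cdiv (Cplus z a) (Cplus (RtoC 1) (Cmult (Cconj a) z))).

(* The complete geodesic with ideal endpoints P (start) and Q (end) passes
   through A and then B, in the order P, A, B, Q: it is the image of the
   real diameter (-1,1) under a disk isometry sending -1 to P and 1 to Q. *)
Definition geod_through (P Q A B : C) : Prop :=
  exists (a : C) (th s t : R),
    Cmod a < 1 /\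
    disk_aut a th (RtoC (-1)) = P /\ disk_aut a th (RtoC 1) = Q /\
    -1 < s /\ s < t /\ t < 1 /\
    disk_aut a th (RtoC s) = A /\ disk_aut a th (RtoC t) = B.

(* Main.v *)
Require Import Defs.
From Stdlib Require Import Reals ZArith Lra Lia Psatz Nsatz.
From Coquelicot Require Import Coquelicot.
Open Scope R_scope.
Add Field Cfield : C_field_theory.

Lemma C_neq0 (z : C) : 0 < fst z ^ 2 + snd z ^ 2 -> z <> 0%C.
Proof. intros H E; subst z; simpl in H; lra. Qed.

Lemma one_plus_xy x y : x^2 < 1 -> y^2 <= 1 -> 0 < 1 + x*y.
Proof. intros. assert ((x*y)^2 < 1) by nra. nra. Qed.

Lemma pos_sq x y : 0 < x -> 0 < x^2 + y^2.
Proof. intros; nra. Qed.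

Lemma Cmod_lt1 (a : C) : Cmod a < 1 -> fst a ^ 2 + snd a ^ 2 < 1.
Proof.
  unfold Cmod; intros H.
  destruct (Rlt_or_le (fst a ^ 2 + snd a ^ 2) 1) as [h|h]; auto.
  apply sqrt_le_1_alt in h. rewrite sqrt_1 in h. lra.
Qed.

Lemma Cconj_R (x : R) : Cconj (RtoC x) = RtoC x.
Proof. unfold Cconj, RtoC; simpl; f_equal; ring. Qed.

Lemma cis_unit th : (cis th * Cconj (cis th))%C = 1%C.
Proof.
  unfold cis, Cconj, Cmult, RtoC; simpl. f_equal.
  - rewrite <- (sin2_cos2 th); unfold Rsqr; ring.
  - ring.
Qed.

Lemma cis_neq0 th : cis th <> 0%C.
Proof. intro E. pose proof (cis_unit th) as H. rewrite E, Cmult_0_l in H.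
  apply C1_nz; auto. Qed.

Lemma mob_gdir a th s w : Cmod a < 1 -> -1 < s < 1 -> -1 <= w <= 1 ->
  gdir (disk_aut a th (RtoC s)) (disk_aut a th (RtoC w)) =
  ((cis th * (1 + a * RtoC s) / (1 + Cconj a * RtoC s)) * RtoC ((w - s) / (1 - s * w)))%C.
Proof.
  intros Ha Hs Hw. apply Cmod_lt1 in Ha.
  destruct a as [a1 a2]; simpl in Ha.
  assert (h1 : a1^2 < 1) by nra.
  assert (hs : s^2 <= 1) by nra. assert (hw : w^2 <= 1) by nra.
  assert (n1 : (1 + Cconj (a1, a2) * RtoC s)%C <> 0%C).
  { apply C_neq0, pos_sq. simpl. pose proof (one_plus_xy a1 s h1 hs). lra. }
  assert (n2 : (1 + (a1, a2) * RtoC s)%C <> 0%C).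
  { apply C_neq0, pos_sq. simpl. pose proof (one_plus_xy a1 s h1 hs). lra. }
  assert (n3 : (1 + Cconj (a1, a2) * RtoC w)%C <> 0%C).
  { apply C_neq0, pos_sq. simpl. pose proof (one_plus_xy a1 w h1 hw). lra. }
  assert (n4 : (1 - RtoC s * RtoC w)%C <> 0%C).
  { apply C_neq0, pos_sq. simpl. nra. }
  assert (n5 : (1 - (a1, a2) * Cconj (a1, a2))%C <> 0%C).
  { apply C_neq0, pos_sq. simpl. nra. }
  assert (nu := cis_neq0 th).
  assert (Hu : Cconj (cis th) = (/ cis th)%C).
  { pose proof (cis_unit th). field_simplify_eq; auto.
    rewrite Cmult_comm; auto. }
  unfold gdir, disk_aut.
  rewrite Cmult_conj, Cdiv_conj by auto.
  rewrite Cplus_conj, Cplus_conj, Cmult_conj, Cconj_conj, Cconj_R, Hu.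
  assert (hc1 : Cconj 1 = 1%C) by (apply (Cconj_R 1)).
  rewrite hc1.
  rewrite RtoC_div by (simpl; nra).
  rewrite RtoC_minus, RtoC_minus, RtoC_mult.
  set (ab := Cconj (a1, a2)) in *. set (A := (a1, a2)) in *.
  set (u := cis th) in *.
  assert (D : (1 - / u * ((RtoC s + ab) / (1 + A * RtoC s)) * (u * ((RtoC w + A) / (1 + ab * RtoC w))))%C
     = ((1 - A * ab) * (1 - RtoC s * RtoC w) / ((1 + A * RtoC s) * (1 + ab * RtoC w)))%C).
  { field. auto. }
  rewrite D. field. auto.
Qed.

Lemma scal_lemma (K : C) x y l : x = - (l * y) -> (K * RtoC x)%C = (RtoC l * - (K * RtoC y))%C.
Proof. intros ->. destruct K as [k1 k2]. unfold Cmult, Copp, RtoC; simpl. f_equal; ring. Qed.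

Lemma cis_mod th : Cmod (cis th) = 1.
Proof. unfold Cmod, cis; simpl.
  replace (cos th * (cos th * 1) + sin th * (sin th * 1)) with 1 by (pose proof (sin2_cos2 th) as E; unfold Rsqr in E; nra).
  apply sqrt_1. Qed.

Lemma disk_aut_bd a th x : Cmod a < 1 -> (x = 1 \/ x = -1) -> Cmod (disk_aut a th (RtoC x)) = 1.
Proof.
  intros Ha Hx. apply Cmod_lt1 in Ha. destruct a as [a1 a2]; simpl in Ha.
  assert (h1 : a1^2 < 1) by nra.
  unfold disk_aut. rewrite Cmod_mult, cis_mod, Rmult_1_l.
  assert (n : (1 + Cconj (a1, a2) * RtoC x)%C <> 0%C).
  { apply C_neq0, pos_sq. simpl. destruct Hx; subst; nra. }
  rewrite Cmod_div by auto.
  assert (E : Cmod (RtoC x + (a1, a2)) = Cmod (1 + Cconj (a1, a2) * RtoC x)).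
  { unfold Cmod. f_equal. simpl. destruct Hx; subst; ring. }
  rewrite E. field. intro E0. apply Cmod_eq_0 in E0. auto.
Qed.

Lemma geod_props P Q A B : geod_through P Q A B ->
  Cmod P = 1 /\ Cmod Q = 1 /\
  (exists l, 0 < l /\ gdir A P = (RtoC l * - gdir A B)%C) /\
  (exists m, 0 < m /\ gdir B Q = (RtoC m * - gdir B A)%C).
Proof.
  intros (a & th & s & t & Ha & HP & HQ & H1 & H2 & H3 & HA & HB).
  subst P Q A B.
  split; [apply disk_aut_bd; auto|].
  split; [apply disk_aut_bd; auto|].
  split.
  - exists ((1 - s*t)/(t - s)). split.
    + apply Rdiv_lt_0_compat; nra.
    + rewrite !mob_gdir by (auto; lra). apply scal_lemma. field. repeat split; nra.
  - exists ((1 - s*t)/(t - s)). split.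
    + apply Rdiv_lt_0_compat; nra.
    + rewrite !mob_gdir by (auto; lra). apply scal_lemma. field. repeat split; nra.
Qed.

Lemma unit_cc (c : C) : Cmod c = 1 -> (c * Cconj c)%C = 1%C.
Proof. intros H. rewrite <- Cmod2_conj, H. unfold RtoC. simpl. f_equal; ring. Qed.

Lemma gdir_rot c V X : Cmod c = 1 -> gdir (c * V) (c * X) = (c * gdir V X)%C.
Proof.
  intros H. unfold gdir. rewrite Cmult_conj.
  replace (Cconj c * Cconj V * (c * X))%C with ((c * Cconj c) * (Cconj V * X))%C by field.
  rewrite unit_cc by auto. rewrite Cmult_1_l. unfold Cdiv. generalize (/ (1 - Cconj V * X))%C. intro d. field.
Qed.

Lemma Cinv_conj' (y : C) : Cconj (/ y) = (/ Cconj y)%C.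
Proof. destruct y as [y1 y2]. unfold Cinv, Cconj. cbn [fst snd].
  replace ((- y2) ^ 2) with (y2 ^ 2) by ring. f_equal. unfold Rdiv; ring. Qed.

Lemma gdir_conj V X : gdir (Cconj V) (Cconj X) = Cconj (gdir V X).
Proof.
  unfold gdir, Cdiv. rewrite Cmult_conj, Cinv_conj', !Cminus_conj, Cmult_conj, Cconj_conj.
  assert (E: Cconj 1 = 1%C) by (apply injective_projections; simpl; ring). rewrite E. reflexivity.
Qed.

Lemma vangle_rot c u v : Cmod c = 1 -> vangle (c * u) (c * v) = vangle u v.
Proof.
  intros H. unfold vangle. rewrite !Cmod_mult, H, Cmult_conj.
  replace (c * u * (Cconj c * Cconj v))%C with ((c * Cconj c) * (u * Cconj v))%C by field.
  rewrite unit_cc by auto. rewrite Cmult_1_l. f_equal. f_equal. ring.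
Qed.

Lemma vangle_conj u v : vangle (Cconj u) (Cconj v) = vangle u v.
Proof.
  unfold vangle. rewrite !Cmod_conj, <- Cmult_conj, re_conj. reflexivity.
Qed.

Lemma vangle_sym u v : vangle u v = vangle v u.
Proof.
  unfold vangle. f_equal. f_equal.
  - destruct u, v; simpl; ring.
  - ring.
Qed.

Lemma vangle_scal_l l u v : 0 < l -> vangle (RtoC l * u) v = vangle u v.
Proof.
  intros Hl. unfold vangle. rewrite Cmod_mult, Cmod_R, Rabs_pos_eq by lra.
  rewrite <- Cmult_assoc, re_scal_l.
  destruct (Req_dec (Cmod u * Cmod v) 0) as [E|E].
  - replace (l * Cmod u * Cmod v) with (l * (Cmod u * Cmod v)) by ring. rewrite E, Rmult_0_r.
    unfold Rdiv. rewrite Rinv_0. f_equal. ring.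
  - f_equal. replace (l * Cmod u * Cmod v) with (l * (Cmod u * Cmod v)) by ring. field. repeat split; [intro Z; apply E; rewrite Z; ring | intro Z; apply E; rewrite Z; ring | lra].
Qed.

Lemma vangle_scal_r l u v : 0 < l -> vangle u (RtoC l * v) = vangle u v.
Proof. intros. rewrite vangle_sym, vangle_scal_l by auto. apply vangle_sym. Qed.

Lemma hangle_rot c V X Y : Cmod c = 1 -> hangle (c * V) (c * X) (c * Y) = hangle V X Y.
Proof. intros H. unfold hangle. rewrite !gdir_rot by auto. apply vangle_rot; auto. Qed.

Lemma hangle_conj V X Y : hangle (Cconj V) (Cconj X) (Cconj Y) = hangle V X Y.
Proof. unfold hangle. rewrite !gdir_conj. apply vangle_conj. Qed.

Lemma Cmod_conj_mult c X : Cmod c = 1 -> Cmod (c * X) = Cmod X.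
Proof. intros H. rewrite Cmod_mult, H. ring. Qed.

Lemma cis_conj_mult a b : (Cconj (cis b) * cis a)%C = cis (a - b).
Proof. unfold cis, Cconj, Cmult; simpl. rewrite cos_minus, sin_minus. f_equal; ring. Qed.

Lemma cis_conj a : Cconj (cis a) = cis (- a).
Proof. unfold cis, Cconj; simpl. rewrite cos_neg, sin_neg. reflexivity. Qed.

Lemma pow2_mult (x : R) : x ^ 2 = x * x.
Proof. ring. Qed.

Lemma Re_div (N D : C) : fst (N * / D)%C = (fst N * fst D + snd N * snd D) / (fst D * fst D + snd D * snd D).
Proof. destruct N, D. unfold Cinv, Cmult; simpl. unfold Rdiv. ring_simplify. 
  replace (r1 * (r1 * 1) + r2 * (r2 * 1)) with (r1 * r1 + r2 * r2) by ring. ring. Qed.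

Lemma Im_div (N D : C) : snd (N * / D)%C = (snd N * fst D - fst N * snd D) / (fst D * fst D + snd D * snd D).
Proof. destruct N, D. unfold Cinv, Cmult; simpl. unfold Rdiv.
  replace (r1 * (r1 * 1) + r2 * (r2 * 1)) with (r1 * r1 + r2 * r2) by ring. ring. Qed.

Lemma div_eq (N D Y : C) : D <> 0%C -> N = (Y * D)%C -> (N / D)%C = Y.
Proof. intros H E. subst. field. auto. Qed.

Lemma gdir_mul A P : (1 - Cconj A * P)%C <> 0%C -> (gdir A P * (1 - Cconj A * P))%C = (P - A)%C.
Proof. intros H. unfold gdir. field. auto. Qed.

Lemma acos_PI2 t : acos t = PI / 2 -> t = 0.
Proof.
  unfold acos. pose proof PI_RGT_0.
  destruct (Rle_dec t (-1)); [lra|].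
  destruct (Rle_dec 1 t); [lra|].
  intros E. assert (Ea : atan (t / sqrt (1 - t²)) = 0) by lra.
  assert (Q : t / sqrt (1 - t²) = 0).
  { rewrite <- (atan_right_inv (t / sqrt (1 - t²))), Ea. apply tan_0. }
  assert (0 < sqrt (1 - t²)).
  { apply sqrt_lt_R0. unfold Rsqr. nra. }
  unfold Rdiv in Q. apply Rmult_integral in Q. destruct Q as [Q|Q]; auto.
  exfalso. apply Rinv_neq_0_compat in Q; auto. lra.
Qed.

Lemma acos_gt_PI4 t : t < / sqrt 2 -> acos t > PI / 4.
Proof.
  intros Ht. pose proof PI_RGT_0.
  destruct (Rle_dec t (-1)) as [h|h].
  { unfold acos. destruct (Rle_dec t (-1)); [lra|contradiction]. }
  assert (hs : / sqrt 2 < 1).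
  { rewrite <- Rinv_1. apply Rinv_lt_contravar. rewrite Rmult_1_l. apply sqrt_lt_R0; lra.
    rewrite <- sqrt_1. apply sqrt_lt_1; lra. }
  assert (Hb : -1 <= t <= 1) by lra.
  pose proof (acos_bound t) as Bd. pose proof (cos_acos t Hb) as Ec.
  destruct (Rlt_or_le (PI/4) (acos t)) as [L|L]; [lra|].
  exfalso. destruct (Rle_lt_or_eq_dec _ _ L) as [L2|L2].
  - pose proof (cos_decreasing_1 (acos t) (PI/4)) as D.
    rewrite Ec, cos_PI4 in D. unfold Rdiv in D. rewrite Rmult_1_l in D.
    assert (/ sqrt 2 < t) by (apply D; lra). lra.
  - rewrite L2, cos_PI4 in Ec. unfold Rdiv in Ec. rewrite Rmult_1_l in Ec. lra.
Qed.

Lemma angle_final (z : C) : fst z < 0 -> vangle z (1, 1) > PI / 4.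
Proof.
  intros Hz. destruct z as [z1 z2]. simpl in Hz. unfold vangle. apply acos_gt_PI4.
  assert (E2 : Cmod (1, 1) = sqrt 2).
  { unfold Cmod. simpl. f_equal. ring. }
  rewrite E2.
  assert (Hm : 0 < Cmod (z1, z2)).
  { unfold Cmod; simpl. apply sqrt_lt_R0. nra. }
  assert (Hs : 0 < sqrt 2) by (apply sqrt_lt_R0; lra).
  assert (Hlt : z1 + z2 < Cmod (z1, z2)).
  { unfold Cmod; simpl. destruct (Rle_or_lt z2 0).
    - pose proof (sqrt_pos (z1 * (z1 * 1) + z2 * (z2 * 1))). lra.
    - assert (z2 <= sqrt (z1 * (z1 * 1) + z2 * (z2 * 1))).
      { rewrite <- (sqrt_square z2) at 1 by lra. apply sqrt_le_1_alt. nra. }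
      lra. }
  unfold Cmult, Cconj, Re; simpl.
  replace (z1 * 1 - z2 * - (1)) with (z1 + z2) by ring.
  apply (Rmult_lt_reg_r (Cmod (z1, z2) * sqrt 2)). nra.
  unfold Rdiv. rewrite Rmult_assoc, Rinv_l by nra.
  replace (/ sqrt 2 * (Cmod (z1, z2) * sqrt 2)) with (Cmod (z1, z2)) by (field; lra). lra.
Qed.

Lemma Cmod1_sq (P : C) : Cmod P = 1 -> fst P * fst P + snd P * snd P = 1.
Proof.
  unfold Cmod. intros H.
  assert (h0 : 0 <= fst P ^ 2 + snd P ^ 2) by nra.
  transitivity (fst P ^ 2 + snd P ^ 2); [ring|].
  rewrite <- (sqrt_sqrt _ h0), H. ring.
Qed.

Lemma den_nz A P : Cmod A < 1 -> Cmod P = 1 -> (1 - Cconj A * P)%C <> 0%C.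
Proof.
  intros HA HP E.
  assert (E1 : (Cconj A * P)%C = 1%C).
  { replace (Cconj A * P)%C with (1 - (1 - Cconj A * P))%C by field.
    rewrite E. field. }
  apply (f_equal Cmod) in E1. rewrite Cmod_mult, Cmod_conj, HP, Cmod_1 in E1. lra.
Qed.

Lemma gdir_unit A P : Cmod A < 1 -> Cmod P = 1 -> Cmod (gdir A P) = 1.
Proof.
  intros HA HP. pose proof (den_nz A P HA HP) as Hn.
  unfold gdir. rewrite Cmod_div by auto.
  assert (E : Cmod (P - A) = Cmod (1 - Cconj A * P)).
  { apply Cmod1_sq in HP. unfold Cmod. f_equal. destruct A as [a1 a2], P as [p1 p2].
    simpl in *. nsatz. }
  rewrite E. field. intro Z. apply Cmod_eq_0 in Z. auto.
Qed.

Lemma sq_eq_pos a b : 0 < a -> 0 < b -> a * a = b * b -> a = b.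
Proof. intros. nra. Qed.

Lemma rel_alg r x y : 0 < r < 1 -> x * x + y * y = 1 -> 0 < y -> x < 1 ->
  hangle (r, 0) (r * x, - (r * y)) (r * x, r * y) = PI / 2 ->
  (1 - x) * (1 + r * r) = y * (1 - r * r).
Proof.
  intros Hr Hxy Hy Hx H. unfold hangle in H.
  assert (Ev : gdir (r, 0) (r * x, r * y) = Cconj (gdir (r, 0) (r * x, - (r * y)))).
  { rewrite <- gdir_conj. f_equal; apply injective_projections; simpl; ring. }
  rewrite Ev in H. unfold vangle in H. rewrite Cconj_conj, Cmod_conj in H.
  pose (Am := (r * x, - (r * y)) : C). fold Am in H.
  assert (Hnz : (1 - Cconj (r, 0) * Am)%C <> 0%C).
  { apply C_neq0, pos_sq. unfold Am; simpl. assert (x*x <= 1) by nra. assert (r * r * x < 1) by nra. nra. }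
  pose proof (gdir_mul _ _ Hnz) as M.
  remember (gdir (r, 0) Am) as u eqn:Eu. clear Eu Ev. unfold Am in M.
  destruct u as [u1 u2].
  pose proof (f_equal fst M) as M1. pose proof (f_equal snd M) as M2. simpl in M1, M2.
  apply acos_PI2 in H. unfold Cmult, Re in H; simpl in H.
  assert (Hu : u1 * u1 + u2 * u2 <> 0).
  { intro Z. assert (u1 = 0) by nra. assert (u2 = 0) by nra. subst. nra. }
  assert (Hm : Cmod (u1, u2) <> 0).
  { unfold Cmod; simpl. intro Z. apply sqrt_eq_0 in Z; [|nra]. apply Hu. nra. }
  assert (H0 : u1 * u1 - u2 * u2 = 0).
  { unfold Rdiv in H. apply Rmult_integral in H. destruct H as [H|H]; auto.
    exfalso. revert H. apply Rinv_neq_0_compat. apply Rmult_integral_contrapositive; auto. }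
  set (n := (1 - r*r*x) * (1 - r*r*x) + (r*r*y)*(r*r*y)).
  assert (U1 : u1 * n = r * (x - 1) * (1 + r * r)) by (unfold n; clear - M1 M2 Hxy; nsatz).
  assert (U2 : u2 * n = - (r * y * (1 - r * r))) by (unfold n; clear - M1 M2 Hxy; nsatz).
  assert (Q : (r * ((1 - x) * (1 + r * r))) * (r * ((1 - x) * (1 + r * r))) =
              (r * (y * (1 - r * r))) * (r * (y * (1 - r * r)))).
  { transitivity ((u1 * n) * (u1 * n)). rewrite U1; ring.
    transitivity ((u2 * n) * (u2 * n)). 2: rewrite U2; ring. nra. }
  apply sq_eq_pos in Q.
  - apply (Rmult_eq_reg_l r); lra.
  - apply Rmult_lt_0_compat; [lra|]. apply Rmult_lt_0_compat; nra.
  - apply Rmult_lt_0_compat; [lra|]. apply Rmult_lt_0_compat; nra.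
Qed.

Lemma Cmod_rxy r x y : 0 <= r -> x * x + y * y = 1 -> Cmod (r * x, r * y) = r.
Proof.
  intros Hr H. unfold Cmod; simpl.
  replace (r * x * (r * x * 1) + r * y * (r * y * 1)) with (r * r) by nsatz.
  apply sqrt_square; auto.
Qed.

Lemma core_alg r co si x y (P Q : C) l l' :
  0 < r < 1 -> co * co + si * si = 1 -> 0 < co -> 0 < si -> si < 1/3 ->
  x = co * co - si * si -> y = 2 * si * co ->
  (1 + r * r) * si = (1 - r * r) * co ->
  Cmod P = 1 ->
  0 < l -> gdir (r * x, r * y) P = Cmult (RtoC l) (Copp (gdir (r * x, r * y) (r * (x * x - y * y), r * (2 * x * y)))) ->
  0 < l' -> gdir (r, 0) Q = Cmult (RtoC l') (Copp (gdir (r, 0) (r * x, - (r * y)))) ->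
  hangle (r, 0) P Q > PI / 4.
Proof.
  intros Hr HCS HC HS HS3 Hx Hy Hrel HP Hl HPd Hl' HQd.
  assert (Hxy : x * x + y * y = 1) by (clear - HCS Hx Hy; subst; nsatz).
  assert (Hx1 : x * x <= 1) by nra.
  pose (m := r * (co + si) / (2 * co)).
  assert (Hm : m * (2 * co) = r * (co + si)) by (unfold m; field; lra).
  assert (Hm0 : 0 < m) by (unfold m; apply Rdiv_lt_0_compat; nra).
  clearbody m.
  pose (A := (r * x, r * y) : C). pose (B := (r * (x * x - y * y), r * (2 * x * y)) : C).
  pose (Am := (r * x, - (r * y)) : C). pose (O := (r, 0) : C).
  fold A B in HPd. fold O Am in HQd. fold O.
  assert (F1 : gdir A B = (m * (- x - y), m * (x - y))).
  { unfold gdir. apply div_eq.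
    - apply C_neq0, pos_sq. unfold A, B; simpl.
      assert (E : r * x * (r * (x * x - y * y)) - - (r * y) * (r * (2 * x * y)) = r * r * x) by (clear - Hxy; nsatz).
      rewrite E. nra.
    - apply injective_projections; unfold A, B; simpl;
      apply (Rmult_eq_reg_l co); try lra; clear - Hm Hrel HCS Hx Hy Hxy; subst x y; nsatz. }
  assert (F2 : gdir O Am = (- m, - m)).
  { unfold gdir. apply div_eq.
    - apply C_neq0, pos_sq. unfold O, Am; simpl. nra.
    - apply injective_projections; unfold O, Am; simpl;
      apply (Rmult_eq_reg_l co); try lra; clear - Hm Hrel HCS Hx Hy Hxy; subst x y; nsatz. }
  rewrite F1 in HPd. rewrite F2 in HQd.
  assert (HA : Cmod A < 1) by (unfold A; rewrite Cmod_rxy; lra).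
  pose proof (gdir_unit A P HA HP) as HU.
  pose proof (gdir_mul A P (den_nz A P HA HP)) as HM.
  rewrite HPd in HU, HM.
  apply Cmod1_sq in HU. apply Cmod1_sq in HP.
  destruct P as [p1 p2]. simpl in HP.
  pose proof (f_equal fst HM) as M1. pose proof (f_equal snd HM) as M2.
  unfold A in M1, M2. simpl in HU, M1, M2.
  pose (k := l * m). assert (Hk : k = l * m) by reflexivity. clearbody k.
  assert (Hk0 : 0 < k) by (subst k; nra).
  assert (Hk2 : 2 * k * k = 1) by (clear - HU Hk Hxy; nsatz).
  assert (Hp1 : p1 * (1 + 2 * r * k + r * r) = x * (k + 2 * r + r * r * k) + y * k * (1 - r * r))
    by (clear - M1 M2 Hk Hk2 Hxy HP; nsatz).
  set (q := 1 + r * r).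
  assert (Hq : q * (co + si) = 2 * co) by (unfold q; clear - Hrel; nsatz).
  assert (Hr2 : r * r * (co + si) = co - si) by (clear - Hrel; nsatz).
  assert (HN : (x * (k + 2 * r + r * r * k) + y * k * (1 - r * r)) * q = q * (k * q + 2 * r - 4 * r * si * si))
    by (unfold q; clear - Hrel HCS Hx Hy; subst x y; nsatz).
  assert (HS2 : si * si < 1/9) by nra.
  assert (HC2 : co * co > 8/9) by nra.
  assert (K1 : 2 * r * co * (co + si) > 0) by nra.
  assert (K2 : (2 * r * co * (co + si)) * (2 * r * co * (co + si)) = 4 * co * co * (co * co - si * si)) by (clear - Hr2; nsatz).
  assert (K3 : k < 2 * r * co * (co + si)) by nra.
  assert (K4 : k * q < 4 * r * co * co).
  { apply (Rmult_lt_reg_r (co + si)); [lra|].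
    replace (k * q * (co + si)) with (k * (q * (co + si))) by ring. rewrite Hq. nra. }
  assert (K5 : (1 - r * r) * (1 - r * r) * (co * co) = q * q * (si * si)) by (unfold q; clear - Hrel; nsatz).
  assert (K6 : k * ((1 - r * r) * (1 - r * r)) < 4 * r * q * si * si).
  { apply (Rmult_lt_reg_r (co * co)); [nra|].
    replace (k * ((1 - r * r) * (1 - r * r)) * (co * co)) with (k * q * (q * (si * si))) by (clear - K5; nsatz).
    assert (0 < q * (si * si)) by (unfold q; nra).
    replace (4 * r * q * si * si * (co * co)) with ((4 * r * co * co) * (q * (si * si))) by ring.
    apply Rmult_lt_compat_r; auto. }
  assert (Dn : 0 < 1 + 2 * r * k + r * r) by nra.
  assert (Key : p1 * q < 2 * r).
  { apply (Rmult_lt_reg_r (1 + 2 * r * k + r * r)); auto.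
    replace (p1 * q * (1 + 2 * r * k + r * r)) with (p1 * (1 + 2 * r * k + r * r) * q) by ring.
    rewrite Hp1, HN.
    assert (E : 2 * r * (1 + 2 * r * k + r * r) - q * (k * q + 2 * r - 4 * r * si * si)
              = 4 * r * q * si * si - k * ((1 - r * r) * (1 - r * r))) by (unfold q; ring).
    lra. }
  pose (one1 := (1, 1) : C).
  assert (EQ : gdir O Q = Cmult (RtoC (l' * m)) one1)
    by (rewrite HQd; apply injective_projections; unfold one1; simpl; ring).
  unfold hangle. rewrite EQ.
  rewrite vangle_scal_r by nra. unfold one1.
  apply angle_final.
  unfold gdir, Cdiv. rewrite Re_div. unfold O; simpl.
  assert (Num : (p1 + - r) * (1 + - (r * p1 - - 0 * p2)) + (p2 + - 0) * (0 + - (r * p2 + - 0 * p1)) < 0).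
  { unfold q in Key. nra. }
  set (nn := (p1 + - r) * (1 + - (r * p1 - - 0 * p2)) + (p2 + - 0) * (0 + - (r * p2 + - 0 * p1))) in *.
  set (dd := (1 + - (r * p1 - - 0 * p2)) * (1 + - (r * p1 - - 0 * p2)) +
     (0 + - (r * p2 + - 0 * p1)) * (0 + - (r * p2 + - 0 * p1))).
  assert (Hrp : r * p1 < 1) by nra. assert (Hdd : 0 < dd) by (unfold dd; nra).
  assert (0 < - nn / dd) by (apply Rdiv_lt_0_compat; lra).
  replace (nn / dd) with (- (- nn / dd)) by (field; lra). lra.
Qed.

Definition W (N r j : R) : C := Cmult (RtoC r) (cis (2 * PI * j / N)).

Lemma vert_rot g r th0 k m : nsides g <> 0 ->
  Cmult (Cconj (cis (th0 + 2 * PI * IZR m / nsides g))) (vert g r th0 k) = W (nsides g) r (IZR (k - m)).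
Proof.
  intros HN. unfold vert, W.
  replace (Cconj (cis (th0 + 2 * PI * IZR m / nsides g)) * (RtoC r * cis (th0 + 2 * PI * IZR k / nsides g)))%C
    with (RtoC r * (Cconj (cis (th0 + 2 * PI * IZR m / nsides g)) * cis (th0 + 2 * PI * IZR k / nsides g)))%C by field.
  rewrite cis_conj_mult. f_equal. f_equal. rewrite minus_IZR. field. auto.
Qed.

Lemma W_conj N r j : Cconj (W N r j) = W N r (- j).
Proof. unfold W. rewrite Cmult_conj, Cconj_R, cis_conj. f_equal. f_equal. unfold Rdiv; ring. Qed.

Lemma W_val N r j : 0 < N -> 
  let x := cos (PI / N) * cos (PI / N) - sin (PI / N) * sin (PI / N) in
  let y := 2 * sin (PI / N) * cos (PI / N) in
  (j = 0 -> W N r j = (r, 0)) /\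
  (j = 1 -> W N r j = (r * x, r * y)) /\
  (j = -1 -> W N r j = (r * x, - (r * y))) /\
  (j = 2 -> W N r j = (r * (x * x - y * y), r * (2 * x * y))).
Proof.
  intros HN x y.
  assert (E1 : cos (2 * (PI / N)) = x) by (unfold x; apply cos_2a).
  assert (E2 : sin (2 * (PI / N)) = y) by (unfold y; apply sin_2a).
  unfold W, cis, RtoC, Cmult; simpl.
  repeat split; intros ->.
  - replace (2 * PI * 0 / N) with 0 by (field; lra). rewrite cos_0, sin_0.
    apply injective_projections; simpl; ring.
  - replace (2 * PI * 1 / N) with (2 * (PI / N)) by (field; lra). rewrite E1, E2.
    apply injective_projections; simpl; ring.
  - replace (2 * PI * -1 / N) with (- (2 * (PI / N))) by (field; lra).
    rewrite cos_neg, sin_neg, E1, E2.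
    apply injective_projections; simpl; ring.
  - replace (2 * PI * 2 / N) with (2 * (2 * (PI / N))) by (field; lra).
    rewrite (cos_2a (2 * (PI / N))), (sin_2a (2 * (PI / N))), E1, E2.
    apply injective_projections; simpl; ring.
Qed.

Section WL.
Variables (N r j : R).
Hypothesis HN : 0 < N.
Let x := cos (PI / N) * cos (PI / N) - sin (PI / N) * sin (PI / N).
Let y := 2 * sin (PI / N) * cos (PI / N).
Lemma W_0 : j = 0 -> W N r j = (r, 0).
Proof. apply (W_val N r j HN). Qed.
Lemma W_1 : j = 1 -> W N r j = (r * x, r * y).
Proof. apply (W_val N r j HN). Qed.
Lemma W_m1 : j = -1 -> W N r j = (r * x, - (r * y)).
Proof. apply (W_val N r j HN). Qed.
Lemma W_2 : j = 2 -> W N r j = (r * (x * x - y * y), r * (2 * x * y)).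
Proof. apply (W_val N r j HN). Qed.
End WL.

Lemma rot_scal c l z : (c * (RtoC l * - z))%C = (RtoC l * - (c * z))%C.
Proof. field. Qed.

Lemma conj_scal l z : Cconj (RtoC l * - z)%C = (RtoC l * - Cconj z)%C.
Proof. rewrite Cmult_conj, Copp_conj, Cconj_R. reflexivity. Qed.

Ltac zr := rewrite ?minus_IZR, ?plus_IZR; simpl; lra.

Theorem lemma8p1 :
  forall (g : nat) (r th0 : R) (P Q : Z -> C),
    (2 <= g)%nat ->
    0 < r < 1 ->
    (forall k : Z,
        hangle (vert g r th0 k) (vert g r th0 (k - 1)%Z) (vert g r th0 (k + 1)%Z)
        = PI / 2) ->
    (forall k : Z,
        geod_through (P k) (Q (k + 1)%Z) (vert g r th0 k) (vert g r th0 (k + 1)%Z)) ->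
    forall i : Z,
      hangle (vert g r th0 (i + 1)%Z) (P (i + 2)%Z) (Q (i + 1)%Z) > PI / 4 /\
      hangle (vert g r th0 i) (Q (i - 1)%Z) (P i) > PI / 4.
Proof.
  intros g r th0 P Q Hg Hr Hang Hgeo i.
  assert (HN : 12 <= nsides g).
  { unfold nsides. apply le_INR in Hg. simpl in Hg. lra. }
  set (N := nsides g) in *.
  assert (HN0 : 0 < N) by lra. assert (HNn : N <> 0) by lra.
  pose proof PI_RGT_0 as HPI. pose proof PI_4 as HPI4.
  assert (Hphi : 0 < PI / N) by (apply Rdiv_lt_0_compat; lra).
  assert (Hphi2 : PI / N <= PI / 12).
  { unfold Rdiv. apply Rmult_le_compat_l; [lra|]. apply Rinv_le_contravar; lra. }
  assert (HS : 0 < sin (PI / N)) by (apply sin_gt_0; lra).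
  assert (HC : 0 < cos (PI / N)) by (apply cos_gt_0; lra).
  assert (HS3 : sin (PI / N) < 1 / 3).
  { pose proof (sin_lt_x (PI / N) Hphi). lra. }
  assert (HCS : cos (PI / N) * cos (PI / N) + sin (PI / N) * sin (PI / N) = 1).
  { pose proof (sin2_cos2 (PI / N)) as E. unfold Rsqr in E. lra. }
  set (co := cos (PI / N)) in *. set (si := sin (PI / N)) in *.
  assert (Hrel : (1 + r * r) * si = (1 - r * r) * co).
  { pose proof (Hang 0%Z) as H0.
    set (c0 := Cconj (cis (th0 + 2 * PI * IZR 0 / N))).
    assert (Hc0 : Cmod c0 = 1) by (unfold c0; rewrite Cmod_conj; apply cis_mod).
    rewrite <- (hangle_rot c0) in H0 by auto.
    unfold c0, N in H0. rewrite !vert_rot in H0 by auto. fold N in H0.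
    rewrite (W_0 N r) in H0 by (auto; zr).
    rewrite (W_1 N r (IZR (0 + 1 - 0))) in H0 by (auto; zr).
    rewrite (W_m1 N r (IZR (0 - 1 - 0))) in H0 by (auto; zr).
    fold co si in H0.
    apply rel_alg in H0; auto.
    - assert (E : si * ((1 + r * r) * si - (1 - r * r) * co) = 0).
      { clear - HCS H0. nsatz. }
      apply Rmult_integral in E. destruct E; lra.
    - clear - HCS. nsatz.
    - nra.
    - nra. }
  split.
  - set (c1 := Cconj (cis (th0 + 2 * PI * IZR (i + 1) / N))).
    assert (Hc1 : Cmod c1 = 1) by (unfold c1; rewrite Cmod_conj; apply cis_mod).
    destruct (geod_props _ _ _ _ (Hgeo (i + 2)%Z)) as (HP1 & _ & (l & Hl & HPd) & _).
    destruct (geod_props _ _ _ _ (Hgeo i)) as (_ & _ & _ & (l' & Hl' & HQd)).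
    apply (f_equal (Cmult c1)) in HPd. apply (f_equal (Cmult c1)) in HQd.
    rewrite rot_scal, <- !gdir_rot in HPd, HQd by auto.
    unfold c1, N in HPd, HQd. rewrite !vert_rot in HPd, HQd by auto. fold N in HPd, HQd.
    rewrite <- (hangle_rot c1) by auto. unfold c1, N. rewrite vert_rot by auto. fold N.
    fold c1 in HPd, HQd |- *.
    rewrite (W_0 N r (IZR (i + 1 - (i + 1)))) in HQd |- * by (auto; zr).
    rewrite (W_m1 N r (IZR (i - (i + 1)))) in HQd by (auto; zr).
    rewrite (W_1 N r (IZR (i + 2 - (i + 1)))) in HPd by (auto; zr).
    rewrite (W_2 N r (IZR (i + 2 + 1 - (i + 1)))) in HPd by (auto; zr).
    fold co si in HPd, HQd.
    apply (core_alg r co si (co * co - si * si) (2 * si * co) _ _ l l'); auto.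
    rewrite Cmod_mult, Hc1, HP1. ring.
  - set (c1 := Cconj (cis (th0 + 2 * PI * IZR i / N))).
    assert (Hc1 : Cmod c1 = 1) by (unfold c1; rewrite Cmod_conj; apply cis_mod).
    destruct (geod_props _ _ _ _ (Hgeo (i - 2)%Z)) as (_ & HQ1 & _ & (l' & Hl' & HQd)).
    destruct (geod_props _ _ _ _ (Hgeo i)) as (_ & _ & (l & Hl & HPd) & _).
    replace (i - 2 + 1)%Z with (i - 1)%Z in HQd, HQ1 by ring.
    apply (f_equal (fun z => Cconj (Cmult c1 z))) in HPd. apply (f_equal (fun z => Cconj (Cmult c1 z))) in HQd.
    rewrite rot_scal, conj_scal, <- !gdir_rot, <- !gdir_conj in HPd, HQd by auto.
    unfold c1, N in HPd, HQd. rewrite !vert_rot in HPd, HQd by auto. fold N in HPd, HQd.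
    rewrite <- (hangle_rot c1) by auto.
    rewrite <- hangle_conj. unfold c1, N. rewrite vert_rot by auto. fold N.
    fold c1 in HPd, HQd |- *.
    repeat rewrite W_conj in HPd. repeat rewrite W_conj in HQd. repeat rewrite W_conj.
    rewrite (W_0 N r (- IZR (i - i))) in HPd |- * by (auto; zr).
    rewrite (W_m1 N r (- IZR (i + 1 - i))) in HPd by (auto; zr).
    rewrite (W_1 N r (- IZR (i - 1 - i))) in HQd by (auto; zr).
    rewrite (W_2 N r (- IZR (i - 2 - i))) in HQd by (auto; zr).
    fold co si in HPd, HQd.
    apply (core_alg r co si (co * co - si * si) (2 * si * co) _ _ l' l); auto.
    rewrite Cmod_conj, Cmod_mult, Hc1, HQ1. ring.
Qed.
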